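(* A rhombic satin of odd order belongs to species $28_o$, and a rhombic satin of even order belongs to species $28_e$.
   Context: A prefabric consists of two perpendicular layers of unit-width strands, warps (vertical) and wefts (horizontal). The plane is divided into unit square cells. Each cell is dark if the warp is on top (seen from the front) and pale otherwise. A symmetry is an isometry of the plane, possibly combined with the side reversal $\tau$, preserving the prefabric. $G_1$ denotes the planar part of the symmetry group, and $H_1$ its side-preserving subgroup. Let $\delta$ be the length of a cell diagonal and $\beta=\delta/2$. The $(n,s)$ satin, with $\gcd(n,s)=1$, is the design of period $n$ in which row $i$ has its single dark cell in column $is \bmod n$. It is isonemal iff $s^2\equiv\pm1\pmod n$ and square iff $s^2\equiv-1\pmod n$. A non-square isonemal satin is rectangular if $n$ is even and $s^2\equiv 1\pmod{2n}$. Otherwise it is called rhombic. A prefabric belongs to species 28 if: - $G_1$ is of crystallographic type $cmm$, with axes at $45^\circ$ to the strands; - the glide-reflections whose axes lie between the mirrors are side-reversing; - all half-turns are side-preserving, so that $H_1$ is of type $p2$ with the rhombic $G_1$ lattice unit; - some half-turn centres lie at cell centres. The supplementary half-turn centres are those at intersections of glide-reflection axes. In each rhombic lattice unit they are the four corners of a central rectangle, which is bounded by glide-reflection axes. - Species $28_e$: the supplementary half-turn centres lie at cell corners, and the central rectangle measures $a\delta$ by $b\delta$ with $a$ odd, $b$ even, and $\gcd(a,b)=1$. - Species $28_o$: the supplementary half-turn centres lie on cell edges but not at cell corners, and the central rectangle measures $a\beta$ by $b\beta$ with $a,b$ odd and $\gcd(a,b)=1$. *)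

(* Defs.v *)
From HB Require Import structures.
From mathcomp Require Import all_boot all_order all_algebra.
Set Implicit Arguments. Unset Strict Implicit. Unset Printing Implicit Defensive.
Import Order.TTheory GRing.Theory Num.Theory.
Local Open Scope ring_scope.

(* Cells are indexed by (x, y) : int * int (x = column, y = row); the  *)
(* centre of cell (x, y) is the point (x, y) of the plane, measured in *)
(* units of the strand width.  Points of the plane that matter here    *)
(* (half-turn centres, points on axes) have half-integer coordinates;  *)
(* we represent a point p by its DOUBLED coordinates P = 2p : int*int. *)

Definition cell_centre (P : int * int) : bool :=
  ~~ odd (absz P.1) && ~~ odd (absz P.2).
Definition cell_corner (P : int * int) : bool :=
  odd (absz P.1) && odd (absz P.2).
Definition on_cell_edge (P : int * int) : bool :=
  odd (absz P.1) || odd (absz P.2).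

(* A prefabric: dark x y = true iff cell (x, y) is dark (warp on top). *)
Definition prefabric := int -> int -> bool.

(* Isometries of the plane preserving the strand structure (the square *)
(* grid of cells).  In cell-centre coordinates these are exactly the   *)
(* maps p |-> A p + t with A one of the 8 signed permutation matrices  *)
(* and t in Z^2:  (x,y) |-> (sx u + t1, sy v + t2) where (u,v) = (y,x) *)
(* if gsw (warps and wefts interchanged) and (u,v) = (x,y) otherwise,  *)
(* and the sign flags gsx, gsy mean negation.                          *)
Record gisom := GIsom { gsw : bool; gsx : bool; gsy : bool; gt1 : int; gt2 : int }.

Definition sgn (b : bool) (u : int) : int := if b then - u else u.

Definition gapp (g : gisom) (c : int * int) : int * int :=
  let uv := if gsw g then (c.2, c.1) else c in
  (sgn (gsx g) uv.1 + gt1 g, sgn (gsy g) uv.2 + gt2 g).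

(* The symmetry (g, tau^e) preserves the prefabric D.  An isometry     *)
(* interchanging warps and wefts sends the strand on top at a cell to  *)
(* a strand of the other kind, so it complements the colour; so does   *)
(* the side reversal tau.                                              *)
Definition is_sym (D : prefabric) (g : gisom) (e : bool) : Prop :=
  forall x y : int,
    D (gapp g (x, y)).1 (gapp g (x, y)).2 = (D x y (+) gsw g) (+) e.

Definition in_G1 D g := exists e, is_sym D g e.
(* g combined (or not) with tau: side-preserving iff in H_1. *)
Definition side_preserving D g := is_sym D g false.
Definition side_reversing D g := is_sym D g true.

Definition is_transl (g : gisom) := ~~ gsw g && ~~ gsx g && ~~ gsy g.
Definition is_halfturn (g : gisom) := ~~ gsw g && gsx g && gsy g.
(* reflections/glide-reflections with axes parallel to (1,1) *)
Definition is_diagM (g : gisom) := gsw g && ~~ gsx g && ~~ gsy g.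
(* reflections/glide-reflections with axes parallel to (1,-1) *)
Definition is_diagN (g : gisom) := gsw g && gsx g && gsy g.

Definition transl (t : int * int) := GIsom false false false t.1 t.2.
Definition transl_vec D (t : int * int) := in_G1 D (transl t).

(* Half-turn p |-> -p + t has centre t/2, i.e. doubled centre t. *)
Definition ht_centre (g : gisom) : int * int := (gt1 g, gt2 g).

(* For is_diagM g, g(P) = (P2 + 2 t1, P1 + 2 t2) in doubled coordinates:
   reflection in the axis {P | P1 - P2 = t1 - t2} followed by the
   translation (t1 + t2)/2 * (1,1) (cell units) along the axis.
   For is_diagN g, g is the reflection in {P | P1 + P2 = t1 + t2}
   followed by the translation (t1 - t2)/2 * (1,-1) along the axis. *)
Definition axisM (g : gisom) : int := gt1 g - gt2 g.
Definition glideM (g : gisom) : int := gt1 g + gt2 g.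
Definition axisN (g : gisom) : int := gt1 g + gt2 g.
Definition glideN (g : gisom) : int := gt1 g - gt2 g.

Definition mirror_axis_M D (k : int) :=
  exists g, [/\ in_G1 D g, is_diagM g, glideM g = 0 & axisM g = k].
Definition mirror_axis_N D (k : int) :=
  exists g, [/\ in_G1 D g, is_diagN g, glideN g = 0 & axisN g = k].

Definition between_glide_M D g :=
  [/\ in_G1 D g, is_diagM g, glideM g != 0 & ~ mirror_axis_M D (axisM g)].
Definition between_glide_N D g :=
  [/\ in_G1 D g, is_diagN g, glideN g != 0 & ~ mirror_axis_N D (axisN g)].

Definition glide_axis_M D (k : int) := exists g, between_glide_M D g /\ axisM g = k.
Definition glide_axis_N D (k : int) := exists g, between_glide_N D g /\ axisN g = k.

(* G_1 is of crystallographic type cmm, with axes at 45 degrees to the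
   strands: point group {I, -I, M, -M} (M the reflection in a diagonal),
   mirrors in both diagonal directions, a two-dimensional translation
   lattice L which is centred (rhombic) with respect to the mirror
   directions, i.e. L <> (L cap R(1,1)) + (L cap R(1,-1)).  Among the
   plane groups with point group 2mm this singles out cmm. *)
Definition cmm_diag (D : prefabric) : Prop :=
  [/\ forall g, in_G1 D g ->
        [|| is_transl g, is_halfturn g, is_diagM g | is_diagN g],
      exists g, in_G1 D g /\ is_halfturn g,
      (exists k, mirror_axis_M D k) /\ (exists k, mirror_axis_N D k),
      exists t u, [/\ transl_vec D t, transl_vec D u & t.1 * u.2 - t.2 * u.1 != 0]
    & exists t, transl_vec D t /\
        ~ (exists a b : int, [/\ t = (a + b, a - b), transl_vec D (a, a)
                                & transl_vec D (b, - b)])].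

Definition H1_p2_same_lattice (D : prefabric) : Prop :=
  [/\ forall g, side_preserving D g -> is_transl g || is_halfturn g,
      exists g, side_preserving D g /\ is_halfturn g
    & forall t, transl_vec D t -> side_preserving D (transl t)].

Definition species28 (D : prefabric) : Prop :=
  [/\ cmm_diag D,
      forall g, between_glide_M D g \/ between_glide_N D g -> side_reversing D g,
      forall g, in_G1 D g -> is_halfturn g -> side_preserving D g,
      H1_p2_same_lattice D
    & exists g, [/\ in_G1 D g, is_halfturn g & cell_centre (ht_centre g)]].

Definition supp_centre (D : prefabric) (P : int * int) : Prop :=
  [/\ exists g, [/\ in_G1 D g, is_halfturn g & ht_centre g = P],
      glide_axis_M D (P.1 - P.2)
    & glide_axis_N D (P.1 + P.2)].

Definition spacing (K : int -> Prop) (d : int) : Prop :=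
  [/\ 0 < d, exists k, K k
    & forall k, K k -> K (k + d) /\ (forall k', K k' -> ~ (k < k' < k + d))].

(* The central rectangle (bounded by consecutive glide-reflection axes,
   with corners at supplementary half-turn centres) has sides of lengths
   u * (beta/2) and v * (beta/2), where beta = delta/2 is half a cell
   diagonal: the perpendicular distance between the lines
   {P1 -+ P2 = k} and {P1 -+ P2 = k'} (doubled coordinates) is
   |k - k'| * beta / 2.  Side of length u*(beta/2) is between consecutive
   glide axes parallel to (1,1); the other between those parallel to (1,-1). *)
Definition central_rectangle (D : prefabric) (u v : int) : Prop :=
  spacing (glide_axis_M D) u /\ spacing (glide_axis_N D) v.

(* Species 28_e: supplementary centres at cell corners, rectangle
   a*delta by b*delta (delta = 4 * (beta/2)), a odd, b even, coprime. *)
Definition species28e (D : prefabric) : Prop :=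
  [/\ species28 D,
      exists P, supp_centre D P,
      forall P, supp_centre D P -> cell_corner P
    & exists a b : nat, [/\ odd a, ~~ odd b, coprime a b &
        central_rectangle D (4 * a%:Z) (4 * b%:Z)
        \/ central_rectangle D (4 * b%:Z) (4 * a%:Z)]].

(* Species 28_o: supplementary centres on cell edges but not at corners,
   rectangle a*beta by b*beta (beta = 2 * (beta/2)), a, b odd, coprime. *)
Definition species28o (D : prefabric) : Prop :=
  [/\ species28 D,
      exists P, supp_centre D P,
      forall P, supp_centre D P -> on_cell_edge P && ~~ cell_corner P
    & exists a b : nat, [/\ odd a, odd b, coprime a b &
        central_rectangle D (2 * a%:Z) (2 * b%:Z)
        \/ central_rectangle D (2 * b%:Z) (2 * a%:Z)]].

Definition satin (n s : nat) : prefabric :=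
  fun x y => (n%:Z %| x - y * s%:Z)%Z.

Definition isonemal_satin (n s : nat) : bool :=
  (s ^ 2 == 1 %[mod n])%N || (n %| (s ^ 2).+1)%N.
Definition square_satin (n s : nat) : bool := (n %| (s ^ 2).+1)%N.
Definition rectangular_satin (n s : nat) : bool :=
  [&& isonemal_satin n s, ~~ square_satin n s, ~~ odd n
    & (s ^ 2 == 1 %[mod 2 * n])%N].
Definition rhombic_satin (n s : nat) : bool :=
  [&& isonemal_satin n s, ~~ square_satin n s & ~~ rectangular_satin n s].

(* Main.v *)
Require Import Defs.
From HB Require Import structures.
From mathcomp Require Import all_boot all_order all_algebra.
From Stdlib Require Import Ring.
Set Implicit Arguments. Unset Strict Implicit. Unset Printing Implicit Defensive.
Import Order.TTheory GRing.Theory Num.Theory.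
Local Open Scope ring_scope.

Definition zadd (x y : int) : int := x + y.
Definition zmul (x y : int) : int := x * y.
Definition zopp (x : int) : int := - x.
Definition zsub (x y : int) : int := x - y.
Definition zzero : int := 0.
Definition zone : int := 1.
Lemma zaddE (x y : int) : x + y = zadd x y. Proof. by []. Qed.
Lemma zmulE (x y : int) : x * y = zmul x y. Proof. by []. Qed.
Lemma zoppE (x : int) : - x = zopp x. Proof. by []. Qed.
Lemma int_rt : @ring_theory int zzero zone zadd zmul zsub zopp eq.
Proof. split; rewrite /zadd /zmul /zsub /zopp /zone /zzero.
 exact: add0r. exact: addrC. exact: addrA. exact: mul1r. exact: mulrC. exact: mulrA. exact: mulrDl. done. exact: subrr. Qed.
Add Ring int_ring : int_rt.
Ltac iring := match goal with |- @eq _ ?a ?b => change (@eq int a b) end;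
  rewrite ?mulrS ?mulr0n ?zaddE ?zmulE ?zoppE;
  repeat match goal with |- context [@GRing.one ?R] => change (@GRing.one R) with zone end;
  repeat match goal with |- context [@GRing.zero ?R] => change (@GRing.zero R) with zzero end;
  repeat match goal with |- context [Posz 0] => change (Posz 0) with zzero end;
  repeat match goal with |- context [Posz 1] => change (Posz 1) with zone end;
  repeat match goal with |- context [Posz 2] => change (Posz 2) with (zadd zone zone) end;
  ring.

Definition dz (d x : int) := exists q : int, x = q * d.
Lemma dzP d x : reflect (dz d x) (d %| x)%Z.
Proof. exact: dvdzP. Qed.

Lemma dz_lin d x y a b : dz d x -> dz d y -> dz d (a * x + b * y).
Proof. move=> [p ->] [q ->]; exists (a * p + b * q); iring. Qed.
Lemma dz_eq d x y : dz d x -> x = y -> dz d y.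
Proof. by move=> h <-. Qed.
Lemma dz0 d : dz d 0. Proof. by exists 0; iring. Qed.
Lemma dzz d : dz d d. Proof. by exists 1; iring. Qed.
Lemma dzM d x a : dz d x -> dz d (a * x).
Proof. move=> [p ->]; exists (a * p); iring. Qed.
Lemma dzN d x : dz d (- x) -> dz d x.
Proof. move=> [p h]; exists (- p); rewrite -[x]opprK h; iring. Qed.

Definition hyps (n s : nat) :=
  [/\ (2 < n)%N, exists u v : int, u * n%:Z + v * s%:Z = 1,
      dz n%:Z (s%:Z * s%:Z - 1), ~ dz n%:Z (s%:Z * s%:Z + 1)
    & dz 2 n%:Z -> ~ dz (2 * n%:Z) (s%:Z * s%:Z - 1)].

Definition inL (n s : nat) (x y : int) := dz n%:Z (x - y * s%:Z).

Lemma satinP n s x y : reflect (inL n s x y) (satin n s x y).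
Proof. exact: dzP. Qed.

Lemma dz_small (n : nat) (c : nat) : (2 < n)%N -> (0 < c <= 2)%N -> ~ dz n%:Z c%:Z.
Proof.
move=> hn /andP[c0 c2] /dzP; rewrite dvdzE /= => /(dvdn_leq c0) h.
by move: (leq_trans h c2); rewrite leqNgt hn.
Qed.

Lemma nodiv n s c : hyps n s -> dz n%:Z c ->
  [\/ c = 1 \/ c = -1, c = s%:Z \/ c = - s%:Z, c = 2 * s%:Z \/ c = - (2 * s%:Z)
    | c = 1 + s%:Z * s%:Z \/ c = - (1 + s%:Z * s%:Z)] -> False.
Proof.
case=> hn [u [v huv]] _ hns _ hc.
have h1 : ~ dz n%:Z 1 by exact: (@dz_small n 1).
have h2 : ~ dz n%:Z 2 by exact: (@dz_small n 2).
have hS : ~ dz n%:Z s%:Z.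
  move=> hs; apply: h1; apply: (dz_eq (dz_lin u v (dzz n%:Z) hs)); by rewrite huv.
have hS2 : ~ dz n%:Z (2 * s%:Z).
  move=> hs; apply: h2; apply: (dz_eq (dz_lin (2 * u) v (dzz n%:Z) hs)).
  by rewrite -[2 in RHS]mulr1 -huv; iring.
have hsq : ~ dz n%:Z (1 + s%:Z * s%:Z).
  by move=> h; apply: hns; apply: (dz_eq h); iring.
case=> [[]|[]|[]|[]] e; subst c;
  by [apply: h1|apply: hS|apply: hS2|apply: hsq|move/dzN: hc|move/dzN: hc|move/dzN: hc|move/dzN: hc].
Qed.

Lemma inL_shift n s a b t1 t2 : inL n s t1 t2 ->
  inL n s (a + t1) (b + t2) <-> inL n s a b.
Proof.
move=> ht; split=> h.
  apply: (dz_eq (dz_lin 1 (-1) h ht)); iring.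
apply: (dz_eq (dz_lin 1 1 h ht)); iring.
Qed.

Lemma inL_neg n s a b : inL n s (- a) (- b) <-> inL n s a b.
Proof. split=> h; apply: (dz_eq (dzM (-1) h)); iring. Qed.

Lemma inL_swap n s a b : hyps n s -> inL n s b a <-> inL n s a b.
Proof.
case=> _ _ hsq _ _.
split=> h.
  apply: (dz_eq (dz_lin (- s%:Z) (- a) h hsq)); iring.
apply: (dz_eq (dz_lin (- s%:Z) (- b) h hsq)); iring.
Qed.

Lemma inL_sub n s a b c d : inL n s a b -> inL n s c d -> inL n s (a - c) (b - d).
Proof. move=> h1 h2; apply: (dz_eq (dz_lin 1 (-1) h1 h2)); iring. Qed.

Lemma satin_eq n s a b c d : (inL n s a b <-> inL n s c d) -> satin n s a b = satin n s c d.
Proof. by move=> h; apply/idP/idP => /satinP /h /satinP. Qed.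

Lemma symP n s g e : hyps n s ->
  Defs.is_sym (satin n s) g e <-> [/\ e = gsw g, inL n s (gt1 g) (gt2 g) & gsx g = gsy g].
Proof.
move=> H; split.
  move=> hs.
  have g00 : gapp g (0, 0) = (gt1 g, gt2 g).
    by case: g {hs} => [[] [] [] t1 t2]; rewrite /gapp /sgn /= ?oppr0 ?add0r.
  have L00 : satin n s 0 0 by apply/satinP; exists 0; iring.
  have Lk (k : int) : inL n s (gapp g (k, 0)).1 (gapp g (k, 0)).2 ->
       inL n s (gapp g (k + 1, 0)).1 (gapp g (k + 1, 0)).2 -> False.
    move=> h1 h2; have := inL_sub h2 h1.
    case: g {hs g00 h1 h2} => [[] [] [] t1 t2]; rewrite /gapp /sgn /= => h;
    apply: (nodiv H h); rewrite /=;
    first [ by constructor 1; (left + right); iring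
          | by constructor 2; (left + right); iring ].
  have esw : e = gsw g.
    apply/eqP; apply/negPn/negP => ne.
    have hx : forall x y, satin n s (gapp g (x, y)).1 (gapp g (x, y)).2 = ~~ satin n s x y.
      move=> x y; rewrite hs -addbA.
      have -> : gsw g (+) e = true by move: ne; case: (gsw g); case: (e).
      by rewrite addbT.
    have n1 : ~~ satin n s 1 0.
      apply/negP => /satinP h; apply: (nodiv H h); constructor 1; left; iring.
    have n2 : ~~ satin n s (1 + 1) 0.
      apply/negP => /satinP h; case: H => hn _ _ _ _.
      apply: (@dz_small n 2 hn isT); apply: (dz_eq h); rewrite (_ : Posz 2 = 1 + 1) //; iring.
    apply: (Lk 1); apply/satinP; rewrite hx; [exact: n1|exact: n2].
  have ht : inL n s (gt1 g) (gt2 g).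
    by apply/satinP; rewrite -[gt1 g]/((gt1 g, gt2 g).1) -[gt2 g]/((gt1 g, gt2 g).2) -g00 hs L00 esw addbK.
  split => //.
  have LS : satin n s s%:Z 1 by apply/satinP; exists 0; iring.
  have := hs s%:Z 1; rewrite LS esw addbK => /satinP h.
  have := inL_sub h ht; clear h.
  case: g {hs g00 Lk esw ht} => [[] [] [] t1 t2]; rewrite /gapp /sgn /= => h' //;
  exfalso; apply: (nodiv H h');
  first [ by constructor 3; (left + right); iring
        | by constructor 4; (left + right); iring ].
case=> -> ht exy x y.
case: g ht exy => [sw sx sy t1 t2] /= ht -> ; rewrite addbK.
apply: satin_eq; case: sw; case: sy; rewrite /gapp /sgn /=;
  rewrite inL_shift //; rewrite ?inL_neg //; exact: inL_swap.
Qed.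

Lemma inG1P n s g : hyps n s ->
  in_G1 (satin n s) g <-> inL n s (gt1 g) (gt2 g) /\ gsx g = gsy g.
Proof.
move=> H; split.
  by case=> e /(symP _ _ H) [_ ? ?].
by case=> h1 h2; exists (gsw g); apply/(symP _ _ H).
Qed.

Lemma spP n s g : hyps n s ->
  side_preserving (satin n s) g <-> [/\ gsw g = false, inL n s (gt1 g) (gt2 g) & gsx g = gsy g].
Proof.
move=> H; rewrite /side_preserving (symP _ _ H); split; case=> *; split => //.
Qed.

Lemma srP n s g : hyps n s ->
  side_reversing (satin n s) g <-> [/\ gsw g = true, inL n s (gt1 g) (gt2 g) & gsx g = gsy g].
Proof.
move=> H; rewrite /side_reversing (symP _ _ H); split; case=> *; split => //.
Qed.

Lemma inL00 n s : inL n s 0 0. Proof. by exists 0; iring. Qed.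

Lemma not_dz2 (n : nat) : odd n -> ~ dz 2 n%:Z.
Proof. by move=> on /dzP; rewrite dvdzE /= dvdn2 on. Qed.
Lemma dz2 (n : nat) : ~~ odd n -> dz 2 n%:Z.
Proof. by move=> on; apply/dzP; rewrite dvdzE /= dvdn2 on. Qed.

Lemma species28_holds n s : hyps n s -> species28 (satin n s).
Proof.
move=> H.
have hn : (2 < n)%N by case: H.
have ht0 : in_G1 (satin n s) (GIsom false true true 0 0) by apply/inG1P => //; split => //; exact: inL00.
split.
- split.
  + by move=> [[] [] [] t1 t2] /(inG1P _ H) [_ /= e] //.
  + by exists (GIsom false true true 0 0).
  + split.
      exists 0; exists (GIsom true false false 0 0); split => //.
      by apply/inG1P => //; split => //; exact: inL00.
    exists 0; exists (GIsom true true true 0 0); split => //.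
    by apply/inG1P => //; split => //; exact: inL00.
  + exists (n%:Z, 0), (s%:Z, 1); split.
    * by apply/inG1P => //; split => //=; exists 1; iring.
    * by apply/inG1P => //; split => //=; exists 0; iring.
    * rewrite /= mulr1 mul0r subr0; apply/eqP => /= e.
      by case: e => e0; rewrite e0 in hn.
  + case/boolP: (odd n) => on.
      exists (n%:Z, 0); split.
        by apply/inG1P => //; split => //=; exists 1; iring.
      case=> a [b [[e1 e2] _ _]].
      apply: (not_dz2 on); exists a; rewrite e1.
      have -> : b = a - (a - b) by iring.
      by rewrite -e2; iring.
    exists (s%:Z, 1); split.
      by apply/inG1P => //; split => //=; exists 0; iring.
    case=> a [b [[e1 e2] /(inG1P _ H) [[q hq] _] _]]; rewrite /= in hq.
    case: H => _ _ _ _ /(_ (dz2 on)); apply.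
    exists (- q).
    have -> : s%:Z * s%:Z - 1 = - (1 + 1) * (a - a * s%:Z) + (s%:Z + 1 - (1 + 1) * a) * (s%:Z - 1) by iring.
    have -> : s%:Z + 1 - (1 + 1) * a = 0.
      have -> : s%:Z + 1 - (1 + 1) * a = (s%:Z - (a + b)) + (1 - (a - b)) by iring.
      by rewrite -e1 -e2 !subrr; iring.
    rewrite hq; iring.
- move=> g [] [/(inG1P _ H) [h1 h2] hd _ _]; apply/(srP _ H); split => //;
  by move: hd; rewrite /is_diagM /is_diagN; case: (gsw g).
- move=> g /(inG1P _ H) [h1 h2] hd; apply/(spP _ H); split => //;
  by move: hd; rewrite /is_halfturn; case: (gsw g).
- split.
  + by move=> [[] [] [] t1 t2] /(spP _ H) [/= e1 _ e2] //.
  + exists (GIsom false true true 0 0); split => //.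
    by apply/(spP _ H); split => //; exact: inL00.
  + by move=> t /(inG1P _ H) [h _]; apply/(spP _ H).
- by exists (GIsom false true true 0 0).
Qed.

Definition ev (x : int) := dz 2 x.

Lemma two_eq : (2 : int) = 1 + 1. Proof. by []. Qed.

Lemma evP x : ev x \/ ev (x - 1).
Proof.
have r0 : 0 <= (x %% 2)%Z by apply: modz_ge0.
have r2 : (x %% 2)%Z < 2 by apply: ltz_pmod.
have hx := divz_eq x 2.
move: (x %% 2)%Z r0 r2 hx => r r0 r2 hx.
case: r r0 r2 hx => [[|[|k]]|k] //= _ _ hx.
- by left; exists (x %/ 2)%Z; rewrite {1}hx; iring.
- by right; exists (x %/ 2)%Z; rewrite {1}hx; iring.
Qed.

Lemma not_ev1 : ~ ev 1.
Proof. by move/dzP; rewrite dvdzE. Qed.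

Lemma oddE x : odd `|x|%N <-> ~ ev x.
Proof.
split.
  by move=> o /dzP; rewrite dvdzE dvdn2 o.
by move=> h; apply/negPn/negP => o; apply: h; apply/dzP; rewrite dvdzE dvdn2.
Qed.

Lemma ev_odd x : ~ ev x -> ev (x - 1).
Proof. by case: (evP x). Qed.

Lemma nev_of x : ev (x - 1) -> ~ ev x.
Proof.
move=> h1 h2; apply: not_ev1; apply: (dz_eq (dz_lin 1 (-1) h2 h1)); iring.
Qed.

Lemma ev_mull x y : ev x -> ev (x * y).
Proof. by move=> h; apply: (dz_eq (dzM y h)); iring. Qed.

Lemma nev_mul x y : ~ ev x -> ~ ev y -> ~ ev (x * y).
Proof.
move=> /ev_odd [a ha] /ev_odd [b hb]; apply: nev_of.
exists (a * b * 2 + a + b).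
have -> : x = a * 2 + 1 by rewrite -ha; iring.
have -> : y = b * 2 + 1 by rewrite -hb; iring.
rewrite two_eq; iring.
Qed.

Lemma nev_add x y : ~ ev x -> ev y -> ~ ev (x + y).
Proof.
move=> /ev_odd hx hy; apply: nev_of; apply: (dz_eq (dz_lin 1 1 hx hy)); iring.
Qed.

Lemma ev_add2 x y : ~ ev x -> ~ ev y -> ev (x + y).
Proof.
move=> /ev_odd hx /ev_odd hy.
apply: (dz_eq (dz_lin 1 1 (dz_lin 1 1 hx hy) (dzz 2))); rewrite two_eq; iring.
Qed.

Definition Kodd (g : int) (k : int) := dz g k /\ ~ dz (2 * g) k.

Lemma Kodd_ev g k : Kodd g k -> exists m, k = m * g /\ ~ ev m.
Proof.
case=> [[m ->] h]; exists m; split => // [[z hz]]; apply: h; exists z; rewrite hz; iring.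
Qed.

Lemma spacing_Kodd g : 0 < g -> spacing (Kodd g) (2 * g).
Proof.
move=> g0; split.
- by rewrite two_eq mulrDl mul1r; apply: addr_gt0.
- exists g; split; first exact: dzz.
  move=> [q hq]; apply: not_ev1; exists q.
  apply: (@mulfI _ g); first by rewrite gt_eqF.
  by rewrite mulr1 {1}hq; iring.
- move=> k hk; split.
    case: hk => [[m ->] h]; split; first by exists (m + 2); iring.
    move=> [q hq]; apply: h; exists (q - 1).
    have -> : m * g = (m * g + 2 * g) - 2 * g by iring.
    rewrite hq; iring.
  move=> k' hk' /andP[l1 l2].
  case: (Kodd_ev hk) => m [em hm]; case: (Kodd_ev hk') => m' [em' hm'].
  subst k k'.
  have l1' : m < m' by rewrite -(ltr_pM2r g0).
  have l2' : m' < m + 2.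
    by rewrite -(ltr_pM2r g0); apply: (lt_le_trans l2); rewrite le_eqVlt; apply/orP; left; apply/eqP; iring.
  have em1 : m' = m + 1.
    apply/eqP; rewrite eq_le; apply/andP; split.
      by rewrite -ltzD1 -addrA.
    by rewrite lezD1.
  subst m'; apply: hm'.
  case: (evP m) => // h; apply: (dz_eq (dz_lin 1 1 h (dzz 2))); rewrite two_eq; iring.
Qed.

Lemma spacing_ext (K K' : int -> Prop) d : (forall k, K k <-> K' k) -> spacing K d -> spacing K' d.
Proof.
move=> e [d0 [k hk] h]; split => //; first by exists k; apply/e.
move=> k0 /e /h [h1 h2]; split; first by apply/e.
by move=> k' /e; apply: h2.
Qed.

Definition DM n s k := exists x y, inL n s x y /\ k = x - y.
Definition MirM n s k := exists j, k = j + j /\ inL n s j (- j).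
Definition DN n s k := exists x y, inL n s x y /\ k = x + y.
Definition MirN n s k := exists j, k = j + j /\ inL n s j j.

Lemma mirM_iff n s k : hyps n s -> mirror_axis_M (satin n s) k <-> MirM n s k.
Proof.
move=> H; split.
  case=> [[[] [] [] t1 t2]] [/(inG1P _ H) [ht _] hd hg ha] //.
  rewrite /glideM /axisM /= in hg ha.
  have e2 : t2 = - t1.
    by transitivity ((t1 + t2) - t1); [iring | rewrite hg; iring].
  subst t2; exists t1; split => //; rewrite -ha; iring.
case=> j [-> hj]; exists (GIsom true false false j (- j)); split => //.
- by apply/(inG1P _ H).
- by rewrite /glideM /=; iring.
- by rewrite /axisM /=; iring.
Qed.

Lemma mirN_iff n s k : hyps n s -> mirror_axis_N (satin n s) k <-> MirN n s k.
Proof.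
move=> H; split.
  case=> [[[] [] [] t1 t2]] [/(inG1P _ H) [ht _] hd hg ha] //.
  rewrite /glideN /axisN /= in hg ha.
  have e2 : t2 = t1.
    by transitivity (t1 - (t1 - t2)); [iring | rewrite hg; iring].
  subst t2; exists t1; split => //; rewrite -ha; iring.
case=> j [-> hj]; exists (GIsom true true true j j); split => //.
- by apply/(inG1P _ H).
- by rewrite /glideN /=; iring.
Qed.

Lemma gaxM_iff n s k : hyps n s -> glide_axis_M (satin n s) k <-> DM n s k /\ ~ MirM n s k.
Proof.
move=> H; have hn : (2 < n)%N by case: H.
have nz : n%:Z + n%:Z != 0.
  rewrite -PoszD; apply/eqP => -[] /eqP; rewrite addn_eq0 andbb => /eqP e0.
  by rewrite e0 in hn.
split.
  case=> g [[/(inG1P _ H) [ht _] hd hg hm] <-]; split.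
    by exists (gt1 g), (gt2 g).
  by move/(mirM_iff _ H).
case=> [[x [y [hxy ->]]] hm].
case/boolP: (x + y == 0) => e.
  exists (GIsom true false false (x + n%:Z) (y + n%:Z)); split; last by rewrite /axisM /=; iring.
  split => //.
  - apply/(inG1P _ H); split => //=; apply: (dz_eq (dz_lin 1 (1 - s%:Z) hxy (dzz _))); iring.
  - rewrite /glideM /= (_ : x + n%:Z + (y + n%:Z) = (x + y) + (n%:Z + n%:Z)); last by iring.
    by rewrite (eqP e) add0r.
  - rewrite /axisM /= (_ : x + n%:Z - (y + n%:Z) = x - y); last by iring.
    by move/(mirM_iff _ H).
exists (GIsom true false false x y); split => //; split => //.
- by apply/(inG1P _ H).
- by move/(mirM_iff _ H).
Qed.

Lemma gaxN_iff n s k : hyps n s -> glide_axis_N (satin n s) k <-> DN n s k /\ ~ MirN n s k.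
Proof.
move=> H; have hn : (2 < n)%N by case: H.
have nz : n%:Z + n%:Z != 0.
  rewrite -PoszD; apply/eqP => -[] /eqP; rewrite addn_eq0 andbb => /eqP e0.
  by rewrite e0 in hn.
split.
  case=> g [[/(inG1P _ H) [ht _] hd hg hm] <-]; split.
    by exists (gt1 g), (gt2 g).
  by move/(mirN_iff _ H).
case=> [[x [y [hxy ->]]] hm].
case/boolP: (x - y == 0) => e.
  exists (GIsom true true true (x + n%:Z) (y - n%:Z)); split; last by rewrite /axisN /=; iring.
  split => //.
  - apply/(inG1P _ H); split => //=; apply: (dz_eq (dz_lin 1 (1 + s%:Z) hxy (dzz _))); iring.
  - rewrite /glideN /= (_ : x + n%:Z - (y - n%:Z) = (x - y) + (n%:Z + n%:Z)); last by iring.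
    by rewrite (eqP e) add0r.
  - rewrite /axisN /= (_ : x + n%:Z + (y - n%:Z) = x + y); last by iring.
    by move/(mirN_iff _ H).
exists (GIsom true true true x y); split => //; split => //.
- by apply/(inG1P _ H).
- by move/(mirN_iff _ H).
Qed.

Lemma gcd_dvdl (N c : int) : dz (gcdz N c) N. Proof. apply/dzP; exact: dvdz_gcdl. Qed.
Lemma gcd_dvdr (N c : int) : dz (gcdz N c) c. Proof. apply/dzP; exact: dvdz_gcdr. Qed.
Lemma gcd_bez (N c : int) : exists u v, u * N + v * c = gcdz N c.
Proof. by case: (Bezoutz N c) => u [v h]; exists u, v. Qed.
Lemma gcd_pos (n : nat) (c : int) : (0 < n)%N -> 0 < gcdz n%:Z c.
Proof. by move=> hn; rewrite /gcdz ltz_nat gcdn_gt0 /= hn. Qed.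

Lemma gen_a n s c c' : hyps n s -> c * c' = s%:Z * s%:Z - 1 -> dz n%:Z (gcdz n%:Z c * c').
Proof.
case=> _ _ hsq _ _ hcc; case: (gcd_bez n%:Z c) => u [v <-].
apply: (dz_eq (dz_lin (u * c') v (dzz _) hsq)); rewrite -hcc; iring.
Qed.

Lemma gen_b n s c c' j : hyps n s -> c * c' = s%:Z * s%:Z - 1 ->
  (c' - c = 2 \/ c' - c = -2) -> dz n%:Z (j * c') -> dz (gcdz n%:Z c) j.
Proof.
move=> H hcc h2 hj.
have gN := gcd_dvdl n%:Z c; have gc := gcd_dvdr n%:Z c; have hN := gen_a H hcc.
move: (gcdz n%:Z c) gN gc hN => g gN gc hN.
have g2j : dz g (j + j).
  case: gN => p hp; case: hj => q hq; case: gc => r hr.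
  case: h2 => e.
    exists (q * p - j * r); transitivity (j * c' - j * c).
      by transitivity (j * (c' - c)); [rewrite e; iring | iring].
    by rewrite hq hp hr; iring.
  exists (j * r - q * p); transitivity (j * c - j * c').
    by transitivity (- (j * (c' - c))); [rewrite e; iring | iring].
  by rewrite hq hp hr; iring.
case: g2j => w hw.
case: (evP w) => [[z hz]|[z hz]].
  exists z; apply: (@mulfI _ 2) => //; rewrite two_eq.
  transitivity (j + j); first iring.
  by rewrite hw hz; rewrite two_eq; iring.
exfalso.
have ew : w = z * 2 + 1 by rewrite -hz; iring.
set h := j - z * g.
have gh : g = h * 2 by rewrite /h; transitivity ((j + j) - z * 2 * g); [rewrite hw ew; iring | iring].
have evN : ev n%:Z.
  case: gN => p hp; exists (p * h); rewrite hp gh; iring.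
case: (H) => _ _ _ _ /(_ evN); apply.
have : dz n%:Z (h * c').
  apply: (dz_eq (dz_lin 1 (- z) hj hN)); rewrite /h; iring.
case=> p hp; case: gc => r hr.
exists (r * p); rewrite -hcc hr gh.
transitivity (r * (h * c') * 2); first iring.
by rewrite hp; iring.
Qed.

Definition g1 (n s : nat) := gcdz n%:Z (s%:Z - 1).
Definition g2 (n s : nat) := gcdz n%:Z (s%:Z + 1).

Lemma hccM (s : nat) : (s%:Z - 1) * (s%:Z + 1) = s%:Z * s%:Z - 1. Proof. iring. Qed.
Lemma hccN (s : nat) : (s%:Z + 1) * (s%:Z - 1) = s%:Z * s%:Z - 1. Proof. iring. Qed.

Lemma KM_iff n s k : hyps n s -> glide_axis_M (satin n s) k <-> Kodd (g1 n s) k.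
Proof.
move=> H; rewrite (gaxM_iff _ H) /Kodd /g1.
have gN := gcd_dvdl n%:Z (s%:Z - 1); have gc := gcd_dvdr n%:Z (s%:Z - 1).
have hB := gcd_bez n%:Z (s%:Z - 1).
have hN := gen_a H (hccM s).
have hb := fun j => gen_b (j := j) H (hccM s).
move: (gcdz n%:Z (s%:Z - 1)) gN gc hB hN hb => g [p hp] [r hr] [u [v huv]] hN hb.
have hD : DM n s k <-> dz g k.
  split.
    case=> x [y [[q hq] ->]].
    exists (q * p + y * r).
    transitivity ((x - y * s%:Z) + y * (s%:Z - 1)); first iring.
    by rewrite hq hp hr; iring.
  case=> m ->; exists (m * g + v * m), (v * m); split; last iring.
  exists (m * u); transitivity (m * (g - v * (s%:Z - 1))); first iring.
  by rewrite -huv; iring.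
have hM : MirM n s k <-> dz (2 * g) k.
  split.
    case=> j [-> hj].
    have : dz g j.
      apply: hb; first by left; rewrite two_eq; iring.
      by apply: (dz_eq hj); iring.
    by case=> z ->; exists z; rewrite two_eq; iring.
  case=> q ->; exists (q * g); split; first by rewrite two_eq; iring.
  apply: (dz_eq (dzM q hN)); iring.
by rewrite hD hM.
Qed.

Lemma KN_iff n s k : hyps n s -> glide_axis_N (satin n s) k <-> Kodd (g2 n s) k.
Proof.
move=> H; rewrite (gaxN_iff _ H) /Kodd /g2.
have gN := gcd_dvdl n%:Z (s%:Z + 1); have gc := gcd_dvdr n%:Z (s%:Z + 1).
have hB := gcd_bez n%:Z (s%:Z + 1).
have hN := gen_a H (hccN s).
have hb := fun j => gen_b (j := j) H (hccN s).
move: (gcdz n%:Z (s%:Z + 1)) gN gc hB hN hb => g [p hp] [r hr] [u [v huv]] hN hb.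
have hD : DN n s k <-> dz g k.
  split.
    case=> x [y [[q hq] ->]].
    exists (q * p + y * r).
    transitivity ((x - y * s%:Z) + y * (s%:Z + 1)); first iring.
    by rewrite hq hp hr; iring.
  case=> m ->; exists (m * g - v * m), (v * m); split; last iring.
  exists (m * u); transitivity (m * (g - v * (s%:Z + 1))); first iring.
  by rewrite -huv; iring.
have hM : MirN n s k <-> dz (2 * g) k.
  split.
    case=> j [-> hj].
    have : dz g j.
      apply: hb; first by right; rewrite two_eq; iring.
      by apply: (dz_eq (dzM (-1) hj)); iring.
    by case=> z ->; exists z; rewrite two_eq; iring.
  case=> q ->; exists (q * g); split; first by rewrite two_eq; iring.
  apply: (dz_eq (dzM (- q) hN)); iring.
by rewrite hD hM.
Qed.

Lemma modeq_nat (a b d : nat) : (a == b %[mod d])%N <-> dz d%:Z (a%:Z - b%:Z).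
Proof.
split.
  by move=> h; apply/dzP; rewrite -eqz_mod_dvd /= !modz_nat eqz_nat.
by move/dzP; rewrite -eqz_mod_dvd /= !modz_nat eqz_nat.
Qed.

Lemma hyps_of n s : (0 < n)%N -> coprime n s -> rhombic_satin n s -> hyps n s.
Proof.
move=> n0 cop /and3P[iso nsq nrect].
have sq1 : (s ^ 2 == 1 %[mod n])%N.
  by case/orP: iso => // h; rewrite /square_satin h in nsq.
have ss : (s ^ 2)%N = (s * s)%N by rewrite mulnn.
have n3 : (2 < n)%N.
  clear -n0 nsq cop; move: n0 nsq cop; case: n => [|[|[|k]]] //; rewrite /square_satin.
    by rewrite dvd1n.
  by rewrite coprime2n dvdn2 /= oddX /= negbK => _ /negP.
split => //.
- case: (Bezoutz n%:Z s%:Z) => u [v huv]; exists u, v; rewrite huv.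
  by rewrite /gcdz /= (eqP cop).
- move/modeq_nat: sq1; rewrite ss PoszM => h; apply: (dz_eq h); iring.
- move/dzP; rewrite -PoszM (_ : Posz (s * s) + 1 = Posz (s * s).+1); last by rewrite -addn1 PoszD.
  rewrite dvdzE /= -ss.
  by apply/negP.
- move=> ev2 hd.
  have en : ~~ odd n by apply/negP => o; exact: (not_dz2 o ev2).
  have : (s ^ 2 == 1 %[mod 2 * n])%N.
    apply/modeq_nat; rewrite ss !PoszM; apply: (dz_eq hd); iring.
  by move: nrect; rewrite /rectangular_satin iso nsq en /= => /negbTE ->.
Qed.

Lemma evE x : ~~ odd `|x|%N -> ev x.
Proof. by move=> h; apply/dzP; rewrite dvdzE dvdn2. Qed.
Lemma dz_trans d e x : dz d e -> dz e x -> dz d x.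
Proof. by move=> [p ->] [q ->]; exists (q * p); iring. Qed.
Lemma ev_div d x : dz d x -> ev d -> ev x.
Proof. by move=> [p ->] [q ->]; exists (p * q); iring. Qed.
Lemma nevN x : ~ ev x -> ~ ev (- x).
Proof. by move=> h /dzN. Qed.

Lemma suppP n s P : hyps n s -> supp_centre (satin n s) P <->
  [/\ inL n s P.1 P.2, Kodd (g1 n s) (P.1 - P.2) & Kodd (g2 n s) (P.1 + P.2)].
Proof.
move=> H; split.
  case=> [[[[] [] [] t1 t2] [hg hh hc]]] // /(KM_iff _ H) hM /(KN_iff _ H) hN.
  by move/(inG1P _ H): hg => [ht _]; rewrite /ht_centre /= in hc; subst P.
case=> hL hM hN; split.
- exists (GIsom false true true P.1 P.2); split => //; first by apply/(inG1P _ H).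
  by case: P {hL hM hN}.
- by apply/(KM_iff _ H).
- by apply/(KN_iff _ H).
Qed.

Lemma odd_case n s : hyps n s -> odd n -> species28o (satin n s).
Proof.
move=> H on.
have hn : (0 < n)%N by case: H => h _ _ _ _; apply: leq_trans h.
have nev : ~ ev n%:Z by exact: not_dz2.
have g1n : ~ ev (g1 n s) by move=> h; apply: nev; apply: (ev_div (gcd_dvdl _ _) h).
have g2n : ~ ev (g2 n s) by move=> h; apply: nev; apply: (ev_div (gcd_dvdl _ _) h).
split.
- exact: species28_holds.
- exists (n%:Z, 0); apply/(suppP _ H); split => /=.
  + by exists 1; iring.
  + split; first by apply: (dz_eq (gcd_dvdl _ _)); iring.
    case=> q hq; apply: nev; exists (q * g1 n s); rewrite subr0 in hq; rewrite hq; iring.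
  + split; first by apply: (dz_eq (gcd_dvdl _ _)); iring.
    case=> q hq; apply: nev; exists (q * g2 n s); rewrite addr0 in hq; rewrite hq; iring.
- move=> P /(suppP _ H) [_ _ /Kodd_ev [m [hm mo]]].
  have so : ~ ev (P.1 + P.2) by rewrite hm; apply: nev_mul.
  rewrite /on_cell_edge /cell_corner.
  case: (boolP (odd `|P.1|%N)) => o1; case: (boolP (odd `|P.2|%N)) => o2 //=.
    by exfalso; apply: so; apply: ev_add2; apply/oddE.
  by exfalso; apply: so; apply: (dz_eq (dz_lin 1 1 (evE o1) (evE o2))); iring.
- exists (gcdn n `|s%:Z - 1|), (gcdn n `|s%:Z + 1|).
  split.
  + exact: (proj2 (oddE (g1 n s)) g1n).
  + exact: (proj2 (oddE (g2 n s)) g2n).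
  + rewrite /coprime.
    have hd1 := dz_trans (gcd_dvdl (g1 n s) (g2 n s)) (gcd_dvdr n%:Z (s%:Z - 1)).
    have hd2 := dz_trans (gcd_dvdr (g1 n s) (g2 n s)) (gcd_dvdr n%:Z (s%:Z + 1)).
    have hdo : ~ ev (gcdz (g1 n s) (g2 n s)).
      by move=> h; apply: g1n; apply: (ev_div (gcd_dvdl _ _) h).
    have hd : dz (gcdz (g1 n s) (g2 n s)) 2.
      apply: (dz_eq (dz_lin 1 (-1) hd2 hd1)); iring.
    move/oddE: hdo; move/dzP: hd; rewrite dvdzE /=.
    move: (gcdn _ _) => d hd hdo.
    have := @dvdn_leq d 2 isT hd.
    by case: d hd hdo => [|[|[|d]]].
  + left; split.
      apply: (spacing_ext (K := Kodd (g1 n s))); first by move=> k; rewrite (KM_iff _ H).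
      exact: spacing_Kodd (gcd_pos _ hn).
    apply: (spacing_ext (K := Kodd (g2 n s))); first by move=> k; rewrite (KN_iff _ H).
    exact: spacing_Kodd (gcd_pos _ hn).
Qed.

Lemma oddN (a : nat) : odd a <-> ~ ev a%:Z. Proof. exact: (oddE a%:Z). Qed.
Lemma evNat (a : nat) : ~~ odd a -> ev a%:Z. Proof. exact: (@evE a%:Z). Qed.

Lemma cancel2 (x y : int) : x * 2 = y * 2 -> x = y.
Proof. by move=> h; apply: (@mulfI _ 2) => //; rewrite mulrC h mulrC. Qed.

Lemma even_case n s : hyps n s -> ~~ odd n -> species28e (satin n s).
Proof.
move=> H en.
have hn : (0 < n)%N by case: H => h _ _ _ _; apply: leq_trans h.
have evN : ev n%:Z by exact: dz2.
case: (H) => _ [u [v huv]] _ _ /(_ evN) nr.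
have Sodd : ~ ev s%:Z.
  move=> h; apply: not_ev1; apply: (dz_eq (dz_lin u v evN h)); exact: huv.
have evSm : ev (s%:Z - 1) by exact: ev_odd.
have evSp : ev (s%:Z + 1).
  apply: (dz_eq (dz_lin 1 1 evSm (dzz 2))); rewrite two_eq; iring.
have hN1 := gen_a H (hccM s).
have hN2 := gen_a H (hccN s).
have [u2 [v2 huv2]] := gcd_bez n%:Z (s%:Z + 1).
have evg1 : ev (g1 n s).
  by apply/dzP; rewrite dvdz_gcd; apply/andP; split; apply/dzP.
have evg2 : ev (g2 n s).
  by apply/dzP; rewrite dvdz_gcd; apply/andP; split; apply/dzP.
have hg1 := gcd_dvdr n%:Z (s%:Z - 1).
have hg2 := gcd_dvdr n%:Z (s%:Z + 1).
have hp1 := gcd_dvdl n%:Z (s%:Z - 1).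
have hp2 := gcd_dvdl n%:Z (s%:Z + 1).
have hpos1 := gcd_pos (s%:Z - 1) hn.
have hpos2 := gcd_pos (s%:Z + 1) hn.
change (gcdz n%:Z (s%:Z - 1)) with (g1 n s) in hg1, hp1, hN1, hpos1.
change (gcdz n%:Z (s%:Z + 1)) with (g2 n s) in hg2, hp2, hN2, huv2, hpos2.
have [a g1a] : exists a : nat, g1 n s = a%:Z * 2.
  have oA : ~~ odd (gcdn n `|s%:Z - 1|) by apply/negP => /oddN.
  exists (gcdn n `|s%:Z - 1|)./2; change (Posz (gcdn n `|s%:Z - 1|) = (gcdn n `|s%:Z - 1|)./2%:Z * 2).
  by rewrite -PoszM muln2 -{1}(odd_double_half (gcdn n `|s%:Z - 1|)) (negbTE oA) add0n.
have [b g2b] : exists b : nat, g2 n s = b%:Z * 2.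
  have oB : ~~ odd (gcdn n `|s%:Z + 1|) by apply/negP => /oddN.
  exists (gcdn n `|s%:Z + 1|)./2; change (Posz (gcdn n `|s%:Z + 1|) = (gcdn n `|s%:Z + 1|)./2%:Z * 2).
  by rewrite -PoszM muln2 -{1}(odd_double_half (gcdn n `|s%:Z + 1|)) (negbTE oB) add0n.
case: hg1 => r1 hr1; case: hg2 => r2 hr2.
have hdiff : b%:Z * r2 - a%:Z * r1 = 1.
  apply: cancel2; transitivity ((s%:Z + 1) - (s%:Z - 1)); last by iring.
  by rewrite hr1 hr2 g1a g2b; iring.
have nbe : ~ (ev a%:Z /\ ev b%:Z).
  case=> [[x hx] [y hy]]; apply: not_ev1; exists (r2 * y - r1 * x).
  by transitivity (b%:Z * r2 - a%:Z * r1); [rewrite hdiff | rewrite hx hy; iring].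
have nbo : ~ (~ ev a%:Z /\ ~ ev b%:Z).
  case=> oa ob.
  have hr : ev r1 \/ ev r2.
    case: (evP r1) => h1; first by left.
    case: (evP r2) => h2; first by right.
    exfalso; apply: not_ev1; rewrite -hdiff.
    have e := ev_add2 (nev_mul ob (nev_of h2)) (nev_mul oa (nev_of h1)).
    apply: (dz_eq (dz_lin 1 (- a%:Z * r1) e (dzz 2))); rewrite two_eq; iring.
  have hNg : dz n%:Z (g1 n s * g2 n s).
    rewrite -huv2; apply: (dz_eq (dz_lin (g1 n s * u2) v2 (dzz _) hN1)); iring.
  case: hNg => q hq.
  apply: nr; case: hr => [[z hz]|[z hz]].
    exists (z * r2 * q); rewrite -hccM hr1 hr2 hz.
    by transitivity (z * r2 * (g1 n s * g2 n s) * 2); [iring | rewrite hq; iring].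
  exists (z * r1 * q); rewrite -hccM hr1 hr2 hz.
  by transitivity (z * r1 * (g1 n s * g2 n s) * 2); [iring | rewrite hq; iring].
have cop : coprime a b.
  rewrite /coprime.
  have [x hx] : dz (gcdn a b)%:Z a%:Z by apply/dzP; rewrite dvdzE /=; exact: dvdn_gcdl.
  have [y hy] : dz (gcdn a b)%:Z b%:Z by apply/dzP; rewrite dvdzE /=; exact: dvdn_gcdr.
  have : dz (gcdn a b)%:Z 1.
    exists (r2 * y - r1 * x).
    by transitivity (b%:Z * r2 - a%:Z * r1); [rewrite hdiff | rewrite {1}hx {1}hy; iring].
  by move/dzP; rewrite dvdzE /= dvdn1.
have rect : central_rectangle (satin n s) (4 * a%:Z) (4 * b%:Z).
  split.
    apply: (spacing_ext (K := Kodd (g1 n s))); first by move=> k; rewrite (KM_iff _ H).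
    rewrite (_ : 4 * a%:Z = 2 * g1 n s); last by rewrite g1a; iring.
    exact: spacing_Kodd.
  apply: (spacing_ext (K := Kodd (g2 n s))); first by move=> k; rewrite (KN_iff _ H).
  rewrite (_ : 4 * b%:Z = 2 * g2 n s); last by rewrite g2b; iring.
  exact: spacing_Kodd.
split.
- exact: species28_holds.
- exists (s%:Z, 1); apply/(suppP _ H); split => /=.
  + by exists 0; iring.
  + split; first by exists r1.
    case=> q hq; apply: nr; case: hN1 => p hp.
    exists (q * p); rewrite -hccM hq.
    by transitivity (q * (g1 n s * (s%:Z + 1)) * 2); [iring | rewrite hp; iring].
  + split; first by exists r2.
    case=> q hq; apply: nr; case: hN2 => p hp.
    exists (q * p); rewrite -hccN hq.
    by transitivity (q * (g2 n s * (s%:Z - 1)) * 2); [iring | rewrite hp; iring].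
- move=> P /(suppP _ H) [_ /Kodd_ev [m1 [h1 o1]] /Kodd_ev [m2 [h2 o2]]].
  have eP1 : P.1 = m1 * a%:Z + m2 * b%:Z.
    apply: cancel2; transitivity ((P.1 - P.2) + (P.1 + P.2)); first iring.
    by rewrite h1 h2 g1a g2b; iring.
  have eP2 : P.2 = m2 * b%:Z - m1 * a%:Z.
    apply: cancel2; transitivity ((P.1 + P.2) - (P.1 - P.2)); first iring.
    by rewrite h1 h2 g1a g2b; iring.
  rewrite /cell_corner; apply/andP; split; apply/oddE; rewrite ?eP1 ?eP2.
  + case: (evP a%:Z) => ha.
      have hb : ~ ev b%:Z by move=> hb; apply: nbe.
      by rewrite addrC; apply: nev_add; [apply: nev_mul | rewrite mulrC; apply: ev_mull].
    have ha' := nev_of ha.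
    have hb : ev b%:Z by case: (evP b%:Z) => // /nev_of hb; exfalso; apply: nbo.
    by apply: nev_add; [apply: nev_mul | rewrite mulrC; apply: ev_mull].
  + case: (evP a%:Z) => ha.
      have hb : ~ ev b%:Z by move=> hb; apply: nbe.
      apply: nev_add; [apply: nev_mul | apply: dzN; rewrite opprK mulrC; apply: ev_mull] => //.
    have ha' := nev_of ha.
    have hb : ev b%:Z by case: (evP b%:Z) => // /nev_of hb; exfalso; apply: nbo.
    rewrite addrC; apply: nev_add; [apply: nevN; apply: nev_mul | rewrite mulrC; apply: ev_mull] => //.
- case: (boolP (odd a)) => oa.
    exists a, b; split => //; last by left.
    apply/negP => /oddN ob; apply: nbo; split => //; exact/oddN.
  exists b, a; split => //; last by right.
  + apply/oddN => ob; apply: nbe; split => //; exact: evNat.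
  + by rewrite coprime_sym.
Qed.

Theorem theorem2 (n s : nat) :
  (0 < n)%N -> coprime n s -> rhombic_satin n s ->
  (odd n -> species28o (satin n s)) /\ (~~ odd n -> species28e (satin n s)).
Proof.
move=> n0 cop rh; have H := hyps_of n0 cop rh.
by split; [exact: odd_case | exact: even_case].
Qed.
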